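(* Let $(X,\tau_1,\tau_2)$ be a bitopological space, $i,j\in\{1,2\}$, $i\neq j$, which is $(i,j)$-almost regular, $(j,i)$-weakly $P$, a $j$-$P$-space and $(i,j)_r$-nearly paralindelöf. Suppose there is a set $A\subseteq X$ with $j\text{-}\mathrm{cl}(A)=X$ such that the subspace $(A,\tau_1|_A,\tau_2|_A)$ is $(i,j)$-nearly Lindelöf. Then $X$ is $(i,j)$-nearly Lindelöf.
   Context: For a bitopological space $(Y,\sigma_1,\sigma_2)$, $i,j\in\{1,2\}$, $i\neq j$, and $k\in\{1,2\}$, $k\text{-}\mathrm{int}$ and $k\text{-}\mathrm{cl}$ denote interior and closure with respect to $\sigma_k$; ''$k$-open'' means $\sigma_k$-open. A set $B$ is $(i,j)$-regular open if $B=i\text{-}\mathrm{int}(j\text{-}\mathrm{cl}(B))$. $Y$ is $(i,j)$-almost regular if for each $y\in Y$ and each $(i,j)$-regular open $U\ni y$ there is an $(i,j)$-regular open $V$ with $y\in V\subseteq j\text{-}\mathrm{cl}(V)\subseteq U$. A family is a cover of $Y$ if its union is $Y$. A family is $k$-locally countable if every point has a $k$-open neighbourhood meeting at most countably many of its members. $Y$ is a $k$-$P$-space if every intersection of countably many $k$-open sets is $k$-open. $Y$ is $(j,i)$-weakly $P$ if for every countable family $\{U_n\}$ of $j$-open sets, $i\text{-}\mathrm{cl}(\bigcup_n U_n)=\bigcup_n i\text{-}\mathrm{cl}(U_n)$. $Y$ is $(i,j)_r$-nearly paralindelöf if every cover $\{U_\alpha:\alpha\in\Delta\}$ of $Y$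 by $(i,j)$-regular open sets has a $j$-locally countable cover $\{V_\beta:\beta\in B\}$ of $Y$ by $(i,j)$-regular open sets such that for each $\beta$ there is $\alpha(\beta)\in\Delta$ with $j\text{-}\mathrm{cl}(V_\beta)\subseteq U_{\alpha(\beta)}$. $Y$ is $(i,j)$-nearly Lindelöf if for every cover $\{U_\alpha:\alpha\in\Delta\}$ of $Y$ by $i$-open sets there are countably many indices $\alpha_n$, $n\in\mathbb N$, with $Y=\bigcup_n i\text{-}\mathrm{int}(j\text{-}\mathrm{cl}(U_{\alpha_n}))$. Subspaces carry the relative topologies. *)

(* Defs.v *)
From Stdlib Require Import Classical.

Definition set (X : Type) := X -> Prop.

Definition is_topology {X : Type} (t : set X -> Prop) : Prop :=
  t (fun _ => False) /\ t (fun _ => True) /\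
  (forall U V : set X, t U -> t V -> t (fun x => U x /\ V x)) /\
  (forall F : set X -> Prop, (forall U, F U -> t U) ->
     t (fun x => exists U, F U /\ U x)).

Definition subset {X : Type} (A B : set X) : Prop := forall x, A x -> B x.
Definition seteq {X : Type} (A B : set X) : Prop := forall x, A x <-> B x.

Definition interior {X : Type} (t : set X -> Prop) (A : set X) : set X :=
  fun x => exists U, t U /\ U x /\ subset U A.
Definition closure {X : Type} (t : set X -> Prop) (A : set X) : set X :=
  fun x => forall U, t U -> U x -> exists y, U y /\ A y.

Definition countable {D : Type} (C : D -> Prop) : Prop :=
  exists g : D -> nat, forall a b, C a -> C b -> g a = g b -> a = b.

Definition regular_open {X : Type} (ti tj : set X -> Prop) (B : set X) : Prop :=
  seteq B (interior ti (closure tj B)).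

Definition almost_regular {X : Type} (ti tj : set X -> Prop) : Prop :=
  forall (y : X) (U : set X), regular_open ti tj U -> U y ->
    exists V, regular_open ti tj V /\ V y /\
      subset V (closure tj V) /\ subset (closure tj V) U.

Definition is_cover {X D : Type} (U : D -> set X) : Prop :=
  forall x, exists a, U a x.

Definition locally_countable {X B : Type} (tk : set X -> Prop) (V : B -> set X) : Prop :=
  forall x, exists W, tk W /\ W x /\
    countable (fun b => exists y, W y /\ V b y).

Definition P_space {X : Type} (tk : set X -> Prop) : Prop :=
  forall U : nat -> set X, (forall n, tk (U n)) -> tk (fun x => forall n, U n x).

(* (j,i)-weakly P: ti-closure of countable unions of tj-open sets *)
Definition weakly_P {X : Type} (tj ti : set X -> Prop) : Prop :=
  forall U : nat -> set X, (forall n, tj (U n)) ->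
    seteq (closure ti (fun x => exists n, U n x))
          (fun x => exists n, closure ti (U n) x).

Definition r_nearly_paralindelof {X : Type} (ti tj : set X -> Prop) : Prop :=
  forall (D : Type) (U : D -> set X),
    (forall a, regular_open ti tj (U a)) -> is_cover U ->
    exists (B : Type) (V : B -> set X),
      (forall b, regular_open ti tj (V b)) /\ is_cover V /\
      locally_countable tj V /\
      (forall b, exists a, subset (closure tj (V b)) (U a)).

Definition nearly_lindelof {X : Type} (ti tj : set X -> Prop) : Prop :=
  forall (D : Type) (U : D -> set X),
    (forall a, ti (U a)) -> is_cover U ->
    exists C : D -> Prop, countable C /\
      forall x, exists a, C a /\ interior ti (closure tj (U a)) x.

Definition subspace_top {X : Type} (t : set X -> Prop) (A : set X)
  : set {x : X | A x} -> Prop :=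
  fun V => exists U, t U /\ forall z : {x : X | A x}, V z <-> U (proj1_sig z).

Inductive idx := one | two.
Definition tau {X : Type} (t1 t2 : set X -> Prop) (k : idx) : set X -> Prop :=
  match k with one => t1 | two => t2 end.

(* Main.v *)
Require Import Defs.
From Stdlib Require Import Classical ClassicalEpsilon FunctionalExtensionality PropExtensionality.

Lemma set_ext {X : Type} (S T : set X) : seteq S T -> S = T.
Proof. intro H. apply functional_extensionality; intro x. apply propositional_extensionality; apply H. Qed.

Lemma interior_open {X : Type} (t : set X -> Prop) (Ht : is_topology t) (S : set X) :
  t (interior t S).
Proof.
  destruct Ht as [_ [_ [_ Hu]]].
  specialize (Hu (fun V => t V /\ subset V S) (fun U H => proj1 H)).
  replace (interior t S) with (fun x => exists U, (t U /\ subset U S) /\ U x); auto.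
  apply set_ext; intro x; unfold interior; split.
  - intros [U [[a b] c]]; eauto.
  - intros [U [a [b c]]]; eauto.
Qed.

Lemma compl_closure_open {X : Type} (t : set X -> Prop) (Ht : is_topology t) (S : set X) :
  t (fun y => ~ closure t S y).
Proof.
  destruct Ht as [_ [_ [_ Hu]]].
  specialize (Hu (fun V => t V /\ forall y, V y -> ~ S y) (fun U H => proj1 H)).
  replace (fun y => ~ closure t S y) with (fun x => exists U, (t U /\ forall y, U y -> ~ S y) /\ U x); auto.
  apply set_ext; intro x; unfold closure; split.
  - intros [U [[a b] c]] H. destruct (H U a c) as [y [h1 h2]]. exact (b y h1 h2).
  - intro H. apply not_all_ex_not in H as [U H].
    apply imply_to_and in H as [h1 H]. apply imply_to_and in H as [h2 H].
    exists U; split; [split|]; auto. intros y h3 h4. apply H; eauto.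
Qed.

Lemma closure_incl {X : Type} (t : set X -> Prop) (S : set X) : subset S (closure t S).
Proof. intros x h U _ hU. eauto. Qed.

Lemma int_regular {X : Type} (ti tj : set X -> Prop) (Hti : is_topology ti) (U : set X) :
  regular_open ti tj (interior ti (closure tj U)).
Proof.
  intro x; split.
  - intro h. exists (interior ti (closure tj U)). split; [apply interior_open; auto|].
    split; auto. apply closure_incl.
  - intros [W [hW [hx hs]]]. exists W; split; auto; split; auto.
    intros y hy O hO hOy. destruct (hs y hy O hO hOy) as [z [hz1 hz2]].
    destruct hz2 as [W' [_ [hW' hs']]]. apply (hs' z hW' O hO hz1).
Qed.

Lemma general (X : Type) (ti tj : set X -> Prop) (Hti : is_topology ti) (Htj : is_topology tj)
  (HP : P_space tj) (Hpara : r_nearly_paralindelof ti tj)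
  (A : set X) (Hdense : seteq (closure tj A) (fun _ => True))
  (HA : nearly_lindelof (subspace_top ti A) (subspace_top tj A)) :
  nearly_lindelof ti tj.
Proof.
  intros D U HU Hcov.
  set (R := fun a => interior ti (closure tj (U a))).
  destruct (Hpara D R) as [B [V [HVr [HVc [_ HVs]]]]].
  { intro a; apply int_regular; auto. }
  { intro x. destruct (Hcov x) as [a ha]. exists a. exists (U a); split; auto; split; auto.
    apply closure_incl. }
  assert (HVo : forall b, ti (V b)).
  { intro b. replace (V b) with (interior ti (closure tj (V b))).
    apply interior_open; auto. symmetry; apply set_ext; apply HVr. }
  destruct (HA B (fun b (z : {x : X | A x}) => V b (proj1_sig z))) as [C [[g Hg] HC]].
  { intro b. exists (V b); split; auto. tauto. }
  { intros [z hz]. destruct (HVc z) as [b hb]. exists b; exact hb. }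
  assert (Hmain : forall x, exists b, C b /\ closure tj (V b) x).
  { intro x. apply NNPP; intro Hn.
    set (O := fun n y => forall b, C b -> g b = n -> ~ closure tj (V b) y).
    assert (HO : forall n, tj (O n)).
    { intro n. destruct (classic (exists b, C b /\ g b = n)) as [[b0 [h1 h2]] | hn].
      - replace (O n) with (fun y => ~ closure tj (V b0) y).
        apply compl_closure_open; auto.
        apply set_ext; intro y; unfold O; split.
        + intros h b hb hg. rewrite (Hg b b0 hb h1 (eq_trans hg (eq_sym h2))). exact h.
        + intro h. apply h; auto.
      - replace (O n) with (fun _ : X => True). apply Htj.
        apply set_ext; intro y; unfold O; split; auto.
        intros _ b hb hg. exfalso; eauto. }
    pose proof (HP O HO) as Hop.
    assert (hx : forall n, O n x). { intros n b hb _ hc. apply Hn; eauto. }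
    destruct (proj2 (Hdense x) I _ Hop hx) as [y [hy hAy]].
    destruct (HC (exist _ y hAy)) as [b [hb hint]].
    apply (hy (g b) b hb eq_refl).
    intros O' hO' hO'y.
    destruct hint as [W [_ [hW hsW]]].
    destruct (hsW _ hW (fun z => O' (proj1_sig z))) as [w [hw1 hw2]].
    { exists O'; split; auto; tauto. }
    { exact hO'y. }
    eauto. }
  assert (Hf : forall b, {a | subset (closure tj (V b)) (R a)}).
  { intro b. apply constructive_indefinite_description. apply HVs. }
  set (f := fun b => proj1_sig (Hf b)).
  exists (fun a => exists b, C b /\ f b = a). split.
  - exists (fun a => match excluded_middle_informative (exists b, C b /\ f b = a) with
                     | left h => g (proj1_sig (constructive_indefinite_description _ h))
                     | right _ => 0 end).
    intros a1 a2 h1 h2.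
    destruct (excluded_middle_informative (exists b, C b /\ f b = a1)) as [e1|]; [|contradiction].
    destruct (excluded_middle_informative (exists b, C b /\ f b = a2)) as [e2|]; [|contradiction].
    destruct (constructive_indefinite_description _ e1) as [b1 [c1 f1]].
    destruct (constructive_indefinite_description _ e2) as [b2 [c2 f2]]. simpl.
    intro hg. rewrite <- f1, <- f2, (Hg b1 b2 c1 c2 hg). reflexivity.
  - intro x. destruct (Hmain x) as [b [hb hcl]].
    exists (f b); split; eauto.
    exact (proj2_sig (Hf b) x hcl).
Qed.

Theorem mainTheorem12 (X : Type) (t1 t2 : set X -> Prop)
  (Ht1 : is_topology t1) (Ht2 : is_topology t2) (i j : idx) (Hij : i <> j)
  (Hreg : almost_regular (tau t1 t2 i) (tau t1 t2 j))
  (HwP : weakly_P (tau t1 t2 j) (tau t1 t2 i))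
  (HP : P_space (tau t1 t2 j))
  (Hpara : r_nearly_paralindelof (tau t1 t2 i) (tau t1 t2 j))
  (A : set X) (Hdense : seteq (closure (tau t1 t2 j) A) (fun _ => True))
  (HA : nearly_lindelof (subspace_top (tau t1 t2 i) A) (subspace_top (tau t1 t2 j) A)) :
  nearly_lindelof (tau t1 t2 i) (tau t1 t2 j).
Proof.
  assert (Htau : forall k, is_topology (tau t1 t2 k)) by (intros []; assumption).
  apply (general X _ _ (Htau i) (Htau j) HP Hpara A Hdense HA).
Qed.
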